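(* Let $1<S\le N$, $L$ a band-width vector, $\dot W$ an $L$-admissible matrix, $W_\varepsilon=\mathrm{Id}+\varepsilon\dot W$, $k\in\mathbb N$, $\beta\in\Gamma$, $D_\beta=D_{k,\beta,L}$ and $P_{\varepsilon,\beta}=D_\beta W_\varepsilon$. For all sufficiently small $\varepsilon>0$ let $f^{(1)}_\varepsilon,\dots,f^{(N)}_\varepsilon$ be a unit-norm eigenbasis of $P_{\varepsilon,\beta}$. Then for all $1\le\ell\ne m\le N$ and all sufficiently small $\varepsilon>0$, $\langle f^{(\ell)}_\varepsilon,D_\beta\overline{f^{(m)}_\varepsilon}\rangle=0$.
   Context: A band-width vector is $L=(L_1,\dots,L_S)$ of positive integers with $\sum_sL_s=N$; $N_0=0$, $N_s=N_{s-1}+L_s$, $B_s=\{j:N_{s-1}<j\le N_s\}$. $D_{k,\beta,L}$ is the diagonal matrix with $j$-th entry $e^{-2\pi ik\beta_s}$ for $j\in B_s$. $\dot W$ is $L$-admissible if it is real symmetric and (1) $\dot W_{ij}\ge0$ for $i\ne j$, $\sum_j\dot W_{ij}=0$ for all $i$; (2) $\dot W$ has $N$ distinct eigenvalues; (3) each $\hat W_s=(\dot W_{jk})_{j,k\in B_s}$ has $L_s$ distinct eigenvalues. $\Gamma=\{\beta\in\mathbb R^S: e^{-2\pi ik\beta_{s_1}}\neq e^{-2\pi ik\beta_{s_2}}\text{ for all }k\ne0,\ s_1\ne s_2\}$. $\overline v$ is entrywise conjugation and $\langle v,w\rangle=\sum_jv_j\overline{w_j}$. *)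

(* Defs.v *)
From HB Require Import structures.
From mathcomp Require Import all_boot all_order all_algebra.
From mathcomp Require Import reals trigo.
From mathcomp Require Import complex.
Set Implicit Arguments. Unset Strict Implicit. Unset Printing Implicit Defensive.
Import Order.TTheory GRing.Theory Num.Theory.
Local Open Scope ring_scope.

Section Defs.
Variable R : realType.
Local Notation C := (complex R).

Definition cexp (x : R) : C := Complex (cos x) (sin x).

Definition bandwidth (N S : nat) (L : 'I_S -> nat) : Prop :=
  (forall s, (0 < L s)%N) /\ (\sum_(s < S) L s)%N = N.

(* N_{s-1} in 0-indexed form: offset of block s *)
Definition boff (S : nat) (L : 'I_S -> nat) (s : 'I_S) : nat :=
  (\sum_(t < S | (t < s)%N) L t)%N.

Definition inblock (S : nat) (L : 'I_S -> nat) (s : 'I_S) (j : nat) : bool :=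
  (boff L s <= j < boff L s + L s)%N.

(* D_{k,beta,L}: diagonal matrix with entry e^{-2 pi i k beta_s} at j in B_s *)
Definition Dmat (N S : nat) (L : 'I_S -> nat) (k : nat) (beta : 'I_S -> R) : 'M[C]_N :=
  \matrix_(i, j) (if i == j then
      \sum_(s < S | inblock L s j) cexp (- (2 * pi * k%:R * beta s))
    else 0).

(* entry of an N x N matrix accessed by natural-number indices (0 outside) *)
Definition natent (N : nat) (W : 'M[R]_N) (i j : nat) : R :=
  oapp (fun a : 'I_N => oapp (fun b : 'I_N => W a b) 0 (insub j)) 0 (insub i).

Definition subblock (N S : nat) (L : 'I_S -> nat) (W : 'M[R]_N) (s : 'I_S)
  : 'M[R]_(L s) :=
  \matrix_(a, b) natent W (boff L s + a) (boff L s + b).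

Definition n_distinct_eigen (n : nat) (M : 'M[R]_n) : Prop :=
  exists e : 'I_n -> R, injective e /\ forall i, eigenvalue M (e i).

Definition admissible (N S : nat) (L : 'I_S -> nat) (W : 'M[R]_N) : Prop :=
  [/\ W^T = W,
      (forall i j, i != j -> 0 <= W i j),
      (forall i, \sum_(j < N) W i j = 0),
      n_distinct_eigen W &
      (forall s, n_distinct_eigen (subblock L W s))].

Definition Gamma (S : nat) (beta : 'I_S -> R) : Prop :=
  forall (k : int), k != 0 -> forall s1 s2 : 'I_S, s1 != s2 ->
    cexp (- (2 * pi * k%:~R * beta s1)) != cexp (- (2 * pi * k%:~R * beta s2)).

Definition cdot (N : nat) (v w : 'cV[C]_N) : C := \sum_(j < N) v j 0 * (w j 0)^*.

Definition cconj (N : nat) (v : 'cV[C]_N) : 'cV[C]_N := map_mx (fun z => z^*) v.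

Definition Weps (N : nat) (W : 'M[R]_N) (eps : R) : 'M[C]_N :=
  map_mx (fun x : R => Complex x 0) (1%:M + eps *: W).

Definition unit_eigenbasis (N : nat) (P : 'M[C]_N) (f : 'I_N -> 'cV[C]_N) : Prop :=
  [/\ (forall i, exists lam : C, P *m f i = lam *: f i),
      (forall i, cdot (f i) (f i) = 1) &
      (\matrix_(j, i) f i j 0) \in unitmx].

End Defs.

(* Main.v *)
Require Import Defs.
From HB Require Import structures.
From mathcomp Require Import all_boot all_order all_algebra.
From mathcomp Require Import reals trigo.
From mathcomp Require Import complex.
From mathcomp Require Import zify lra ring.
Set Implicit Arguments. Unset Strict Implicit. Unset Printing Implicit Defensive.
Import Order.TTheory GRing.Theory Num.Theory.
Local Open Scope ring_scope.

Section NC.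
Variable R : rcfType.
Local Notation C := (complex R).
Definition nc (z : C) : R := Normc.normc z.

Lemma nc_ge0 z : 0 <= nc z.
Proof. by case: z => a b; rewrite /nc /= sqrtr_ge0. Qed.
Lemma ncD x y : nc (x + y) <= nc x + nc y.
Proof. exact: le_normcD. Qed.
Lemma ncM x y : nc (x * y) = nc x * nc y.
Proof. exact: Normc.normcM. Qed.
Lemma ncN x : nc (- x) = nc x.
Proof. exact: normcN. Qed.
Lemma nc0 : nc 0 = 0.
Proof. exact: Normc.normc0. Qed.
Lemma nc_eq0 x : (nc x == 0) = (x == 0).
Proof.
apply/eqP/eqP => [/Normc.eq0_normc //|->]; exact: nc0.
Qed.
Lemma nc_gt0 x : x != 0 -> 0 < nc x.
Proof. by move=> h; rewrite lt_def nc_ge0 andbT nc_eq0. Qed.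
Lemma ncB x y : nc (x - y) <= nc x + nc y.
Proof. by rewrite -(ncN y) ncD. Qed.
Lemma ncBr x y : nc x - nc y <= nc (x - y).
Proof.
have := ncD (x - y) y; rewrite subrK; lra.
Qed.
Lemma ncC (r : R) : nc (r%:C)%C = `|r|.
Proof. by rewrite /nc /= expr0n /= addr0 sqrtr_sqr. Qed.
Lemma nc_sum (I : Type) (s : seq I) (P : pred I) (F : I -> C) :
  nc (\sum_(i <- s | P i) F i) <= \sum_(i <- s | P i) nc (F i).
Proof.
elim/big_ind2: _ => [|a b c d h1 h2|i _]; first by rewrite nc0.
  by apply: le_trans (ncD _ _) _; apply: lerD.
by [].
Qed.
End NC.

Lemma finmin (R : realFieldType) (T : finType) (P : pred T) (h : T -> R) :
  (forall t, P t -> 0 < h t) -> exists2 m, 0 < m & forall t, P t -> m <= h t.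
Proof.
move=> hp; set S := \sum_(t | P t) (h t)^-1.
have S0 : 0 <= S by apply: sumr_ge0 => t /hp ht; rewrite invr_ge0 ltW.
exists (1 + S)^-1; first by rewrite invr_gt0; lra.
move=> t Pt; have ht := hp t Pt.
have : (h t)^-1 <= 1 + S.
  rewrite /S (bigD1 t) //=.
  have : 0 <= \sum_(i | P i && (i != t)) (h i)^-1.
    by apply: sumr_ge0 => i /andP[/hp hi _]; rewrite invr_ge0 ltW.
  lra.
move=> H; rewrite -[X in _ <= X](invrK (h t)) lef_pV2 ?posrE ?invr_gt0 //; lra.
Qed.

Section Key.
Variables (R : realType) (N : nat) (blk : 'I_N -> nat).
Local Notation C := (complex R).
Variables (d : 'I_N -> C) (W u : 'I_N -> 'I_N -> C) (mu : 'I_N -> C).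
Hypothesis hd1 : forall i, nc (d i) = 1.
Hypothesis hdb : forall i j, blk i = blk j -> d i = d j.
Hypothesis hdd : forall i j, blk i <> blk j -> d i != d j.
Hypothesis hus : forall a i, blk a <> blk i -> u a i = 0.
Hypothesis hmu : forall a b, blk a = blk b -> a != b -> mu a != mu b.
Hypothesis heig : forall a j, blk j = blk a ->
  \sum_i u a i * W i j = mu a * u a j.
Variable Cc : R.
Hypothesis hCc : 0 < Cc.
Hypothesis hcoer : forall (v : 'I_N -> C) j, exists a, blk a = blk j /\
  nc (v j) <= Cc * nc (\sum_i u a i * v i).

Definition eigv (e lam : C) (x : 'I_N -> C) :=
  forall i, d i * (x i + e * \sum_j W i j * x j) = lam * x i.

Definition Kw : R := 1 + \sum_i \sum_j nc (W i j).
Definition Ku : R := 1 + \sum_a \sum_i nc (u a i).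

Lemma Kw_gt0 : 0 < Kw.
Proof.
rewrite /Kw; have : 0 <= \sum_i \sum_j nc (W i j).
  by apply: sumr_ge0 => i _; apply: sumr_ge0 => j _; apply: nc_ge0.
lra.
Qed.
Lemma Ku_gt0 : 0 < Ku.
Proof.
rewrite /Ku; have : 0 <= \sum_a \sum_i nc (u a i).
  by apply: sumr_ge0 => i _; apply: sumr_ge0 => j _; apply: nc_ge0.
lra.
Qed.

Lemma rowW i : \sum_j nc (W i j) <= Kw.
Proof.
rewrite /Kw [X in _ <= 1 + X](bigD1 i) //=.
have : 0 <= \sum_(k | k != i) \sum_j nc (W k j).
  by apply: sumr_ge0 => k _; apply: sumr_ge0 => j _; apply: nc_ge0.
lra.
Qed.
Lemma rowU a : \sum_i nc (u a i) <= Ku.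
Proof.
rewrite /Ku [X in _ <= 1 + X](bigD1 a) //=.
have : 0 <= \sum_(k | k != a) \sum_j nc (u k j).
  by apply: sumr_ge0 => k _; apply: sumr_ge0 => j _; apply: nc_ge0.
lra.
Qed.

Lemma bound_lin (F : 'I_N -> C) (x : 'I_N -> C) (m : R) (K : R) :
  \sum_j nc (F j) <= K -> (forall j, nc (x j) <= m) -> 0 <= m ->
  nc (\sum_j F j * x j) <= K * m.
Proof.
move=> hK hx hm; apply: le_trans (nc_sum _ _ _) _.
apply: le_trans (_ : \sum_j nc (F j) * m <= _).
  apply: ler_sum => j _; rewrite ncM; apply: ler_wpM2l; [exact: nc_ge0|exact: hx].
by rewrite -mulr_suml; apply: ler_wpM2r.
Qed.

Lemma div_bound (a y z : C) (B : R) : a * y = z -> nc z <= B * nc y -> y != 0 ->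
  nc a <= B.
Proof.
move=> h hz y0; have := nc_gt0 y0 => hy.
by rewrite -(ler_pM2r hy) -ncM h.
Qed.


Lemma entW i j : nc (W i j) <= Kw.
Proof.
apply: le_trans (rowW i); rewrite (bigD1 j) //=.
have : 0 <= \sum_(k | k != j) nc (W i k) by apply: sumr_ge0 => k _; apply: nc_ge0.
lra.
Qed.

Definition K2 (dl : R) : R := N%:R * (Ku * Kw) * (2 * Kw / dl).

Definition ca (x : 'I_N -> C) a := \sum_i u a i * x i.

Lemma loc (dl eps : R) (lam : C) (x : 'I_N -> C) (p : 'I_N) :
  0 < dl -> (forall i j, blk i <> blk j -> dl <= nc (d i - d j)) -> 0 < eps ->
  2 * eps * Kw < dl ->
  eigv (eps%:C)%C lam x -> x p != 0 -> (forall j, nc (x j) <= nc (x p)) ->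
  exists a, [/\ blk a = blk p, nc (lam - d p) <= eps * Kw,
     nc (lam - d p - (eps%:C)%C * d p * mu a) <= eps * eps * (K2 dl * Cc) &
     ca x a != 0].
Proof.
move=> hdl hdld he heK hx xp0 hdom.
set e := (eps%:C)%C in hx *.
have ne : nc e = eps by rewrite /e ncC gtr0_norm.
have Kw0 := Kw_gt0; have Ku0 := Ku_gt0.
have nxp := nc_gt0 xp0.
set Wx := fun i => \sum_j W i j * x j.
have hWx : forall i, nc (Wx i) <= Kw * nc (x p).
  move=> i; apply: bound_lin => //; [exact: rowW | exact: nc_ge0].
have eqi : forall i, (lam - d i) * x i = d i * e * Wx i.
  move=> i; have := hx i; rewrite /Wx => h; rewrite mulrBl -h; ring.
have h1 : nc (lam - d p) <= eps * Kw.
  apply: (div_bound (eqi p)) => //.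
  rewrite !ncM hd1 ne mul1r -mulrA; apply: ler_wpM2l; [lra| exact: hWx].
have h2 : forall i, blk i <> blk p -> nc (x i) <= (2 * eps * Kw / dl) * nc (x p).
  move=> i hi.
  have hl : dl / 2 <= nc (lam - d i).
    have := hdld _ _ hi.
    have -> : d i - d p = (lam - d p) - (lam - d i) by ring.
    have := ncB (lam - d p) (lam - d i).
    lra.
  have H : nc (lam - d i) * nc (x i) <= eps * Kw * nc (x p).
    rewrite -ncM eqi !ncM hd1 ne mul1r -mulrA; apply: ler_wpM2l; [lra|exact: hWx].
  have H2 : dl / 2 * nc (x i) <= eps * Kw * nc (x p).
    by apply: le_trans H; apply: ler_wpM2r => //; exact: nc_ge0.
  have -> : 2 * eps * Kw / dl * nc (x p) = (eps * Kw * nc (x p)) / (dl / 2).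
    by field; apply/eqP; lra.
  by rewrite ler_pdivlMr //; [rewrite mulrC | lra].
pose r a := \sum_j (if blk j == blk a then 0 else \sum_i u a i * W i j) * x j.
have hc : forall a, blk a = blk p ->
    (lam - d p - e * d p * mu a) * ca x a = d p * e * r a.
  move=> a hap.
  have E1 : lam * ca x a = d p * (ca x a + e * \sum_i u a i * Wx i).
    rewrite /ca mulr_sumr mulr_sumr -big_split mulr_sumr /=.
    apply: eq_bigr => i _.
    have [hia|hia] := eqVneq (blk i) (blk a).
      have := hx i; rewrite (hdb (etrans hia hap)) => h.
      transitivity (u a i * (lam * x i)); first by ring.
      by rewrite -h /Wx; ring.
    by rewrite hus; [ring | move=> h; rewrite h eqxx in hia].
  have E2 : \sum_i u a i * Wx i = mu a * ca x a + r a.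
    rewrite /Wx /ca /r.
    under eq_bigr => i _ do rewrite mulr_sumr.
    rewrite exchange_big /= mulr_sumr -big_split /=.
    apply: eq_bigr => j _.
    have -> : \sum_i u a i * (W i j * x j) = (\sum_i u a i * W i j) * x j.
      by rewrite mulr_suml; apply: eq_bigr => i _; ring.
    have [hja|hja] := eqVneq (blk j) (blk a).
      by rewrite heig //; ring.
    rewrite hus; last by move=> h; rewrite h eqxx in hja.
    by ring.
  by rewrite mulrBl mulrBl E1 E2; ring.
have hr : forall a, blk a = blk p -> nc (r a) <= eps * K2 dl * nc (x p).
  move=> a hap; apply: le_trans (nc_sum _ _ _) _.
  apply: le_trans (_ : \sum_(j < N) (Ku * Kw) * (2 * eps * Kw / dl * nc (x p)) <= _).
    apply: ler_sum => j _.
    case: ifP => hja.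
      rewrite mul0r nc0; apply: mulr_ge0; first by apply: mulr_ge0; lra.
      apply: mulr_ge0; last exact: nc_ge0.
      by apply: divr_ge0; [apply: mulr_ge0; [apply: mulr_ge0|]|]; lra.
    rewrite ncM; apply: ler_pM; [exact: nc_ge0|exact: nc_ge0| |].
      apply: (bound_lin (m := Kw)); [exact: rowU| move=> i; exact: entW | lra].
    by apply: h2 => h; move: hja; rewrite h hap eqxx.
  rewrite sumr_const card_ord -mulr_natl le_eqVlt; apply/orP; left; apply/eqP.
  by rewrite /K2; field; apply/eqP; lra.
have [a [hap hxp]] := hcoer x p.
have ca0 : ca x a != 0.
  apply/negP => /eqP h; move: hxp; rewrite /ca in h; rewrite h nc0 mulr0; lra.
exists a; split => //.
apply: (div_bound (hc a hap)) => //.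
rewrite !ncM hd1 ne mul1r.
apply: le_trans (_ : eps * (eps * K2 dl * nc (x p)) <= _).
  by apply: ler_wpM2l; [lra | exact: hr hap].
have K20 : 0 <= K2 dl.
  rewrite /K2; apply: mulr_ge0; first by apply: mulr_ge0; [exact: ler0n|apply: mulr_ge0; lra].
  by apply: divr_ge0; lra.
have -> : eps * (eps * K2 dl * nc (x p)) = (eps * eps * K2 dl) * nc (x p) by ring.
have -> : eps * eps * (K2 dl * Cc) * nc (ca x a) = (eps * eps * K2 dl) * (Cc * nc (ca x a)) by ring.
apply: ler_wpM2l => //; apply: mulr_ge0 => //; apply: mulr_ge0; lra.
Qed.


Lemma uniq_a (dl g eps : R) (lam : C) (p q a b : 'I_N) :
  (forall i j, blk i <> blk j -> dl <= nc (d i - d j)) -> 0 < eps ->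
  2 * eps * Kw < dl ->
  (forall a b, blk a = blk b -> a != b -> g <= nc (mu a - mu b)) ->
  2 * eps * (K2 dl * Cc) < g ->
  blk a = blk p -> nc (lam - d p) <= eps * Kw ->
  nc (lam - d p - (eps%:C)%C * d p * mu a) <= eps * eps * (K2 dl * Cc) ->
  blk b = blk q -> nc (lam - d q) <= eps * Kw ->
  nc (lam - d q - (eps%:C)%C * d q * mu b) <= eps * eps * (K2 dl * Cc) ->
  a = b.
Proof.
move=> hdld he heK hg hgK hap h1 h2 hbq h3 h4.
have hpq : blk p = blk q.
  have [//|/eqP hne] := eqVneq (blk p) (blk q); exfalso; have := hdld _ _ hne.
  have -> : d p - d q = (lam - d q) - (lam - d p) by ring.
  have := ncB (lam - d q) (lam - d p); lra.
rewrite -(hdb hpq) in h4.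
have [//|hab] := eqVneq a b; exfalso.
have := hg _ _ (etrans hap (etrans hpq (esym hbq))) hab.
have E : (eps%:C)%C * d p * (mu a - mu b) =
   (lam - d p - (eps%:C)%C * d p * mu b) - (lam - d p - (eps%:C)%C * d p * mu a)
   by ring.
have := ncB (lam - d p - (eps%:C)%C * d p * mu b) (lam - d p - (eps%:C)%C * d p * mu a).
rewrite -E !ncM hd1 ncC gtr0_norm // mulr1 => H hgm.
have : eps * g <= eps * (eps * (2 * (K2 dl * Cc))).
  apply: le_trans (_ : eps * nc (mu a - mu b) <= _); first by apply: ler_wpM2l; lra.
  lra.
rewrite ler_pM2l // => H2.
have : eps * (2 * (K2 dl * Cc)) = 2 * eps * (K2 dl * Cc) by ring.
lra.
Qed.

Lemma dom_ex (z : 'I_N -> C) : (exists i, z i != 0) ->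
  exists p, z p != 0 /\ forall j, nc (z j) <= nc (z p).
Proof.
case=> i0 hi0.
have [p _ hp] := @arg_maxP _ _ _ i0 xpredT (fun i => nc (z i)) isT.
have hp' : forall j, nc (z j) <= nc (z p) by move=> j; exact: hp.
exists p; split => //.
apply/negP => /eqP h; have := hp' i0; rewrite h nc0; have := nc_gt0 hi0; lra.
Qed.

Lemma eigv_lin e lam x y (al be : C) : eigv e lam x -> eigv e lam y ->
  eigv e lam (fun i => al * x i - be * y i).
Proof.
move=> hx hy i.
have -> : \sum_j W i j * (al * x j - be * y j) =
    al * \sum_j W i j * x j - be * \sum_j W i j * y j.
  by rewrite !mulr_sumr -sumrB; apply: eq_bigr => j _; ring.
transitivity (al * (d i * (x i + e * \sum_j W i j * x j)) -
              be * (d i * (y i + e * \sum_j W i j * y j))); first by ring.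
by rewrite hx hy; ring.
Qed.

Lemma ca_lin x y (al be : C) a :
  ca (fun i => al * x i - be * y i) a = al * ca x a - be * ca y a.
Proof.
by rewrite /ca !mulr_sumr -sumrB; apply: eq_bigr => j _; ring.
Qed.

Lemma key : exists2 eps0 : R, 0 < eps0 & forall eps : R, 0 < eps < eps0 ->
  forall lam x y, eigv (eps%:C)%C lam x -> eigv (eps%:C)%C lam y ->
  (exists i, x i != 0) -> exists c, forall i, y i = c * x i.
Proof.
have hdpos : forall t : 'I_N * 'I_N, blk t.1 != blk t.2 -> 0 < nc (d t.1 - d t.2).
  by move=> t /eqP h; apply: nc_gt0; rewrite subr_eq0; exact: hdd.
have [dl dl0 hdl] := finmin hdpos.
have hdld : forall i j, blk i <> blk j -> dl <= nc (d i - d j).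
  by move=> i j /eqP h; exact: (hdl (i, j)).
have hgpos : forall t : 'I_N * 'I_N, (blk t.1 == blk t.2) && (t.1 != t.2) ->
    0 < nc (mu t.1 - mu t.2).
  by move=> t /andP[/eqP h1 h2]; apply: nc_gt0; rewrite subr_eq0; exact: hmu.
have [g g0 hgl] := finmin hgpos.
have hg : forall a b, blk a = blk b -> a != b -> g <= nc (mu a - mu b).
  by move=> a b h1 h2; apply: (hgl (a, b)); rewrite /= h1 eqxx.
have Kw0 := Kw_gt0.
have K30 : 0 <= K2 dl * Cc.
  apply: mulr_ge0; last exact: ltW hCc.
  rewrite /K2; apply: mulr_ge0; first by apply: mulr_ge0; [exact: ler0n|apply: mulr_ge0; have := Ku_gt0; lra].
  by apply: divr_ge0; [apply: mulr_ge0|]; lra.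
set K3 := K2 dl * Cc in K30 *.
exists (Num.min (dl / (2 * Kw)) (g / (2 * K3 + 1))).
  by rewrite lt_min; apply/andP; split; apply: divr_gt0; lra.
move=> eps /andP[e0]; rewrite lt_min => /andP[e1 e2].
have heK : 2 * eps * Kw < dl.
  by move: e1; rewrite ltr_pdivlMr; lra.
have hgK : 2 * eps * K3 < g.
  move: e2; rewrite ltr_pdivlMr; last lra.
  have : 0 <= eps * (2 * K3) by apply: mulr_ge0; lra.
  move=> h1 h2; have : eps * (2 * K3 + 1) = eps * (2 * K3) + eps by ring.
  have : 2 * eps * K3 = eps * (2 * K3) by ring.
  lra.
move=> lam x y hx hy hxnz.
have [hy0|hy0] := boolP [exists i, y i != 0]; last first.
  exists 0 => i; rewrite mul0r; apply/eqP; move/existsPn: hy0 => /(_ i).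
  by rewrite negbK.
have [p [xp0 hpd]] := dom_ex hxnz.
have [a [hap ha1 ha2 ha3]] := loc dl0 hdld e0 heK hx xp0 hpd.
have [q [yq0 hqd]] := dom_ex (existsP hy0).
have [b [hbq hb1 hb2 hb3]] := loc dl0 hdld e0 heK hy yq0 hqd.
have eab := uniq_a hdld e0 heK hg hgK hap ha1 ha2 hbq hb1 hb2.
subst b.
set z := fun i => ca y a * x i - ca x a * y i.
have hz : eigv (eps%:C)%C lam z by apply: eigv_lin.
have [hz0|hz0] := boolP [exists i, z i != 0].
  have [r [zr0 hrd]] := dom_ex (existsP hz0).
  have [a' [har hr1 hr2 hr3]] := loc dl0 hdld e0 heK hz zr0 hrd.
  have eaa := uniq_a hdld e0 heK hg hgK hap ha1 ha2 har hr1 hr2.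
  subst a'; move: hr3; rewrite /z ca_lin.
  by rewrite mulrC subrr eqxx.
exists (ca y a / ca x a) => i.
move/existsPn: hz0 => /(_ i); rewrite negbK /z subr_eq0 => /eqP h.
apply: (mulfI ha3); rewrite mulrA mulrCA divff // mulr1 -h mulrC //.
Qed.

End Key.

Lemma eig_unit (F : fieldType) n (A : 'M[F]_n) (e : 'I_n -> F) (v : 'I_n -> 'rV[F]_n) :
  injective e -> (forall a, v a *m A = e a *: v a) -> (forall a, v a != 0) ->
  (\matrix_(a, j) v a 0 j) \in unitmx.
Proof.
move=> einj hv vnz; rewrite -row_free_unit; apply: inj_row_free => z hz.
have dx : mxdirect (\sum_(i | predT i) eigenspace A (e i)).
  by apply: mxdirect_sum_eigenspace => i j _ _; exact: einj.
have [A_ _ _ uniqA] := @sub_dsumsmx F 'I_n predT 1 n 0 (fun i => eigenspace A (e i)) dx (sub0mx _ _).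
have e1 : forall a, z 0 a *: v a = A_ a.
  move=> a; apply: (uniqA (fun a => z 0 a *: v a)) => //.
    by move=> i _; apply/eigenspaceP; rewrite -scalemxAl hv scalerA mulrC -scalerA.
  transitivity (z *m \matrix_(a, j) v a 0 j); first by rewrite hz.
  rewrite mulmx_sum_row; apply: eq_bigr => i _; congr (_ *: _).
  by apply/rowP => j; rewrite !mxE.
have e2 : forall a, 0 = A_ a.
  move=> a; apply: (uniqA (fun a => 0)) => //.
    by move=> i _; exact: sub0mx.
  by rewrite big1.
have h1 : forall a, z 0 a *: v a = 0 by move=> a; rewrite e1 -e2.
apply/rowP => a; rewrite mxE; move: (h1 a) => /eqP; rewrite scaler_eq0 (negbTE (vnz a)) orbF.
by move/eqP.
Qed.

Section Coer.
Variable R : realType.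
Local Notation C := (complex R).

Lemma coer n (U : 'M[C]_n) : U \in unitmx -> exists2 Cc : R, 0 < Cc &
  forall (w : 'I_n -> C) j, exists b, nc (w j) <= Cc * nc (\sum_k U b k * w k).
Proof.
move=> hU; set Ui := invmx U.
have S0 : 0 <= \sum_j \sum_b nc (Ui j b).
  by apply: sumr_ge0 => i _; apply: sumr_ge0 => j _; apply: nc_ge0.
exists (1 + \sum_j \sum_b nc (Ui j b)); first lra.
move=> w j.
set c := fun b => \sum_k U b k * w k.
have [b _ hb] := @arg_maxP _ _ _ j xpredT (fun i => nc (c i)) isT.
have hb' : forall i, nc (c i) <= nc (c b) by move=> i; exact: hb.
exists b.
have Ew : w j = \sum_b0 Ui j b0 * c b0.
  have E : (invmx U *m (U *m \col_k w k)) j 0 = w j by rewrite mulKmx // mxE.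
  rewrite -E !mxE; apply: eq_bigr => b0 _; congr (_ * _).
  by rewrite mxE; apply: eq_bigr => k _; rewrite mxE.
rewrite Ew; apply: le_trans (nc_sum _ _ _) _.
apply: le_trans (_ : \sum_b0 nc (Ui j b0) * nc (c b) <= _).
  by apply: ler_sum => b0 _; rewrite ncM; apply: ler_wpM2l; [exact: nc_ge0|exact: hb'].
rewrite -mulr_suml; apply: ler_wpM2r; first exact: nc_ge0.
have : \sum_b0 nc (Ui j b0) <= \sum_j \sum_b nc (Ui j b).
  rewrite [X in _ <= X](bigD1 j) //=.
  have : 0 <= \sum_(k | k != j) \sum_b0 nc (Ui k b0).
    by apply: sumr_ge0 => k _; apply: sumr_ge0 => l _; apply: nc_ge0.
  lra.
lra.
Qed.
End Coer.

Local Close Scope ring_scope.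

Section Part.
Variables (N S : nat) (L : 'I_S -> nat).
Hypothesis hL : bandwidth N L.

Definition Ln (t : nat) : nat := if insub t is Some o then L o else 0%N.
Definition G (m : nat) : nat := (\sum_(t < m) Ln t)%N.

Lemma LnE (o : 'I_S) : Ln o = L o.
Proof. by rewrite /Ln valK. Qed.

Lemma boffE (s : 'I_S) : boff L s = G s.
Proof.
rewrite /G (big_ord_widen S) ?(ltnW (ltn_ord s)) //.
by rewrite /boff; apply: eq_bigr => t _; rewrite LnE.
Qed.

Lemma GS : G S = N.
Proof.
case: hL => _ <-; rewrite /G; apply: eq_bigr => t _; exact: LnE.
Qed.

Lemma Gmono m m' : (m <= m')%N -> (G m <= G m')%N.
Proof.
move=> h; rewrite /G -!(big_mkord xpredT) (big_cat_nat (leq0n m) h) /=.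
exact: leq_addr.
Qed.

Lemma GS1 m : G m.+1 = (G m + Ln m)%N.
Proof. by rewrite /G big_ord_recr. Qed.

Lemma blk_le (s s' : 'I_S) : (s < s')%N -> (boff L s + L s <= boff L s')%N.
Proof.
by move=> h; rewrite !boffE -LnE -GS1; apply: Gmono.
Qed.

Lemma blk_N (s : 'I_S) : (boff L s + L s <= N)%N.
Proof.
by rewrite boffE -LnE -GS1 -GS; apply: Gmono.
Qed.

Lemma blk_ex j : (j < N)%N -> exists s : 'I_S, inblock L s j.
Proof.
have : forall m, (m <= S)%N -> (j < G m)%N -> exists s : 'I_S, inblock L s j.
  elim=> [|m IH] hm; first by rewrite /G big_ord0.
  rewrite GS1 => hj.
  have [hj'|hj'] := ltnP j (G m); first exact: IH (ltnW hm) hj'.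
  exists (Ordinal hm); rewrite /inblock boffE /= hj' /=.
  by rewrite -LnE.
by move=> H hj; apply: (H S) => //; rewrite GS.
Qed.

Lemma blk_uniq (s s' : 'I_S) j : inblock L s j -> inblock L s' j -> s = s'.
Proof.
rewrite /inblock => /andP[h1 h2] /andP[h3 h4].
have [lt|lt|/val_inj //] := ltngtP s s'.
  have := blk_le lt; lia.
have := blk_le lt; lia.
Qed.

End Part.

Local Open Scope ring_scope.

Definition extn (V : nmodType) N (F : 'I_N -> V) (n : nat) : V :=
  if insub n is Some o then F o else 0.

Lemma extnE (V : nmodType) N (F : 'I_N -> V) (i : 'I_N) : extn F i = F i.
Proof. by rewrite /extn valK. Qed.

Lemma transfer (V : nmodType) N (F : 'I_N -> V) (b0 len : nat) :
  (b0 + len <= N)%N -> (forall i : 'I_N, ~~ (b0 <= i < b0 + len)%N -> F i = 0) ->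
  \sum_(i < N) F i = \sum_(c < len) extn F (b0 + c).
Proof.
move=> hN hF.
have hz : forall n, ~~ (b0 <= n < b0 + len)%N -> extn F n = 0.
  move=> n hn; rewrite /extn; case: insubP => // o _ ho; apply: hF; by rewrite ho.
transitivity (\sum_(i < N) extn F i); first by apply: eq_bigr => i _; rewrite extnE.
rewrite -(big_mkord xpredT (extn F)) /=.
rewrite (big_cat_nat (leq0n b0) (_ : b0 <= N)%N) /=; last lia.
rewrite (big_cat_nat (leq_addr len b0) hN) /=.
have Z1 : \sum_(0 <= i < b0) extn F i = 0.
  rewrite big_nat_cond big1 // => i /andP[/andP[_ hi] _]; apply: hz.
  by apply/negP => /andP[h1 h2]; have := leq_trans hi h1; rewrite ltnn.
have Z2 : \sum_(b0 + len <= i < N) extn F i = 0.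
  rewrite big_nat_cond big1 // => i /andP[/andP[hi _] _]; apply: hz.
  by apply/negP => /andP[h1 h2]; have := leq_trans h2 hi; rewrite ltnn.
rewrite Z1 Z2 add0r addr0.
rewrite -{1}(add0n b0) big_addn addKn big_mkord.
by apply: eq_bigr => i _; rewrite addnC.
Qed.

Lemma extnO (V : nmodType) N (F : 'I_N -> V) n (h : (n < N)%N) : extn F n = F (Ordinal h).
Proof. by rewrite /extn insubT. Qed.

Lemma natentE (R : realType) n (M : 'M[R]_n) (i j : 'I_n) : natent M i j = M i j.
Proof. by rewrite /natent !valK. Qed.

Section Block.
Variables (R : realType) (N S : nat) (L : 'I_S -> nat).
Hypothesis hL : bandwidth N L.
Variables (Wd : 'M[R]_N) (s : 'I_S).
Local Notation C := (complex R).
Local Notation bo := (boff L s).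
Local Notation n := (L s).

Lemma inb_lt (a : 'I_N) : inblock L s a -> (a - bo < n)%N.
Proof. by rewrite /inblock; lia. Qed.
Lemma inb_add (a : 'I_N) : inblock L s a -> (bo + (a - bo))%N = a.
Proof. by rewrite /inblock; lia. Qed.
Lemma add_lt (c : 'I_n) : (bo + c < N)%N.
Proof. have := blk_N hL s; have := ltn_ord c; lia. Qed.
Lemma inb_addc (c : 'I_n) : inblock L s (Ordinal (add_lt c)).
Proof. by rewrite /inblock /=; have := ltn_ord c; lia. Qed.

Lemma block_data : n_distinct_eigen (subblock L Wd s) ->
  exists GE : 'M[R]_N * ('I_N -> R) * R,
  [/\ (forall a i : 'I_N, ~~ inblock L s i -> GE.1.1 a i = 0),
      (forall a j : 'I_N, inblock L s a -> inblock L s j ->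
          \sum_i GE.1.1 a i * Wd i j = GE.1.2 a * GE.1.1 a j),
      (forall a a' : 'I_N, inblock L s a -> inblock L s a' -> a != a' ->
          GE.1.2 a != GE.1.2 a'),
      0 < GE.2 &
      (forall (w : 'I_N -> C) (j : 'I_N), inblock L s j -> exists a : 'I_N, inblock L s a /\
          nc (w j) <= GE.2 * nc (\sum_i ((GE.1.1 a i)%:C)%C * w i))].
Proof.
case=> es [einj hes].
set M := subblock L Wd s.
have : forall b, exists v : 'rV[R]_n, v *m M = es b *: v /\ v != 0.
  by move=> b; have /eigenvalueP [v h1 h2] := hes b; exists v.
case/fin_all_exists => V hV.
set U := \matrix_(b, c) V b 0 c.
have hU : U \in unitmx := eig_unit einj (fun b => proj1 (hV b)) (fun b => proj2 (hV b)).
have hUc : map_mx (real_complex R) U \in unitmx by rewrite map_unitmx.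
have [Cs hCs hco] := coer hUc.
pose G : 'M[R]_N := \matrix_(a, i) (if inblock L s a && inblock L s i then
                natent U (a - bo) (i - bo) else 0 : R).
pose ev := fun a : 'I_N => if insub (a - bo)%N is Some b then es b else 0.
have GE : forall (a i : 'I_N) (ha : inblock L s a) (hi : inblock L s i),
    G a i = U (Ordinal (inb_lt ha)) (Ordinal (inb_lt hi)).
  by move=> a i ha hi; rewrite mxE ha hi /= -natentE.
have evE : forall (a : 'I_N) (ha : inblock L s a), ev a = es (Ordinal (inb_lt ha)).
  move=> a ha; rewrite /ev insubT /=; [exact: inb_lt ha|].
  by move=> h; congr (es _); apply: val_inj.
exists (G, ev, Cs); split => //=.
- by move=> a i hi; rewrite mxE (negbTE hi) andbF.
- move=> a j ha hj.
  rewrite (@transfer _ N _ bo n (blk_N hL s)); last first.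
    by move=> i hi; rewrite mxE; move: hi; rewrite -/(inblock L s i) => /negbTE ->; rewrite andbF mul0r.
  set ba := Ordinal (inb_lt ha); set bj := Ordinal (inb_lt hj).
  transitivity (\sum_(c < n) U ba c * M c bj).
    apply: eq_bigr => c _; rewrite (extnO _ (add_lt c)) (GE _ _ ha (inb_addc c)).
    congr (U _ _ * _); first by apply: val_inj; rewrite /= addKn.
    rewrite /M mxE.
    have -> : (bo + bj)%N = j by rewrite /= inb_add.
    by rewrite -[(bo + c)%N]/(nat_of_ord (Ordinal (add_lt c))) natentE.
  rewrite (GE _ _ ha hj) (evE _ ha) -/ba -/bj.
  have := congr1 (fun X : 'rV_n => X 0 bj) (proj1 (hV ba)).
  rewrite !mxE => <-; apply: eq_bigr => c _; by rewrite mxE.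
- move=> a a' ha ha' haa; rewrite (evE _ ha) (evE _ ha').
  apply/negP => /eqP /einj /(congr1 val) /= h.
  move/eqP: haa; apply; apply: val_inj => /=.
  by rewrite -(inb_add ha) -(inb_add ha') h.
- move=> w j hj.
  have [b hb] := hco (fun c => extn w (bo + c)) (Ordinal (inb_lt hj)).
  exists (Ordinal (add_lt b)); split; first exact: inb_addc.
  move: hb; rewrite /= inb_add // -/(extn w j) (extnO w (ltn_ord j)).
  have -> : Ordinal (ltn_ord j) = j by apply: val_inj.
  rewrite (@transfer _ N _ bo n (blk_N hL s)); last first.
    by move=> i hi; rewrite mxE; move: hi; rewrite -/(inblock L s i) => /negbTE ->; rewrite andbF mul0r.
  suff -> : \sum_(c < n) extn (fun i => ((G (Ordinal (add_lt b)) i)%:C)%C * w i) (bo + c) =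
            \sum_k map_mx (real_complex R) U b k * extn w (bo + k) by [].
  apply: eq_bigr => c _; rewrite !(extnO _ (add_lt c)) (GE _ _ (inb_addc b) (inb_addc c)) mxE.
  have eb : forall b0 : 'I_n, Ordinal (inb_lt (inb_addc b0)) = b0.
    by move=> b0; apply: val_inj; rewrite /= addKn.
  by rewrite !eb mxE /U mxE.
Qed.
End Block.

Section Fin.
Variable R : realType.
Local Notation C := (complex R).

Lemma nc_cexp (x : R) : nc (cexp x) = 1.
Proof. by rewrite /nc /cexp /= cos2Dsin2 sqrtr1. Qed.

Lemma cexp_conj (x : R) : cexp x * (cexp x)^* = 1.
Proof.
rewrite /cexp /=; apply/eqP; rewrite eq_complex /=; apply/andP; split; apply/eqP.
  by have := cos2Dsin2 x; rewrite !expr2 => <-; ring.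
by ring.
Qed.

Lemma Dent N S (L : 'I_S -> nat) (k : nat) (beta : 'I_S -> R) (bl : 'I_N -> 'I_S) :
  (forall s (i : 'I_N), inblock L s i = (s == bl i)) ->
  Dmat N L k beta = diag_mx (\row_i cexp (- (2 * pi * k%:R * beta (bl i)))).
Proof.
move=> hb; apply/matrixP => i j; rewrite !mxE.
case: eqP => [<-|_]; last by rewrite mulr0n.
by rewrite mulr1n (big_pred1 (bl i)) // => s; rewrite hb.
Qed.

Lemma eig_coord N (dv : 'rV[C]_N) (Wd : 'M[R]_N) (eps : R) (lam : C) (v : 'cV[C]_N) :
  diag_mx dv *m Weps Wd eps *m v = lam *: v ->
  eigv (fun i => dv 0 i) (fun i j => ((Wd i j)%:C)%C) ((eps%:C)%C) lam (fun i => v i 0).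
Proof.
move=> h i; have := congr1 (fun M : 'cV_N => M i 0) h.
rewrite -mulmxA mul_diag_mx !mxE => <-; congr (_ * _).
have E : forall j, Weps Wd eps i j =
    (if i == j then 1 else 0) + (eps%:C)%C * ((Wd i j)%:C)%C.
  move=> j; rewrite !mxE; case: (i == j); rewrite ?mulr1n ?mulr0n;
  apply/eqP; rewrite eq_complex /=; apply/andP; split; apply/eqP; ring.
under [RHS]eq_bigr => j _ do rewrite E mulrDl.
rewrite big_split /= mulr_sumr; congr (_ + _); last first.
  by apply: eq_bigr => j _; rewrite mulrA.
rewrite (bigD1 i) //= eqxx mul1r big1 ?addr0 // => j hj.
by rewrite eq_sym (negbTE hj) mul0r.
Qed.

End Fin.

Section App.
Variable R : realType.
Local Notation C := (complex R).

Lemma cinj (a b : R) : (a%:C)%C = (b%:C)%C -> a = b.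
Proof. by case. Qed.

Lemma keyapp N S (L : 'I_S -> nat) (k : nat) (beta : 'I_S -> R) (Wd : 'M[R]_N)
  (hL : bandwidth N L) (hW : admissible L Wd) (hbeta : Gamma beta)
  (bl : 'I_N -> 'I_S) (hb : forall s (i : 'I_N), inblock L s i = (s == bl i)) :
  exists2 eps2 : R, 0 < eps2 & forall eps : R, 0 < eps < eps2 ->
  forall lam x y,
   eigv (fun i => cexp (- (2 * pi * k%:R * beta (bl i)))) (fun i j => ((Wd i j)%:C)%C)
        ((eps%:C)%C) lam x ->
   eigv (fun i => cexp (- (2 * pi * k%:R * beta (bl i)))) (fun i j => ((Wd i j)%:C)%C)
        ((eps%:C)%C) lam y ->
   (exists i, x i != 0) -> exists c, forall i, y i = c * x i.
Proof.
case: hW => _ _ _ hWd hWs.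
have [hk0|hk0] := eqVneq k 0%N.
  subst k.
  case: hWd => es [einj hes].
  have : forall b, exists v : 'rV[R]_N, v *m Wd = es b *: v /\ v != 0.
    by move=> b; have /eigenvalueP [v h1 h2] := hes b; exists v.
  case/fin_all_exists => V hV.
  set U := \matrix_(b, c) V b 0 c.
  have hU : U \in unitmx := eig_unit einj (fun b => proj1 (hV b)) (fun b => proj2 (hV b)).
  have hUc : map_mx (real_complex R) U \in unitmx by rewrite map_unitmx.
  have [Cs hCs hco] := coer hUc.
  apply: (@key R N (fun _ => 0%N) _ _ (fun a i => ((U a i)%:C)%C) (fun a => ((es a)%:C)%C) _ _ _ _ _ _ Cs hCs).
  - by move=> i; exact: nc_cexp.
  - by move=> i j _; rewrite !mulr0 !mul0r.
  - by [].
  - by [].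
  - by move=> a b _ hab; apply/negP => /eqP /cinj /einj /eqP; apply/negP.
  - move=> a j _; under eq_bigr => i _ do rewrite -rmorphM.
    rewrite -(rmorph_sum (real_complex R)) -rmorphM.
    congr (_%:C)%C.
    have := congr1 (fun X : 'rV_N => X 0 j) (proj1 (hV a)).
    rewrite !mxE => <-; apply: eq_bigr => i _; by rewrite mxE.
  - move=> v j; have [b hb'] := hco v j; exists b; split => //.
    by move: hb'; congr (_ <= _ * nc _); apply: eq_bigr => i _; rewrite mxE.
have : forall s, exists GE : 'M[R]_N * ('I_N -> R) * R, _ := fun s => @block_data _ _ _ _ hL Wd s (hWs s).
case/fin_all_exists => GE hGE.
pose Cc := 1 + \sum_s (GE s).2.
have hCs : forall s, (GE s).2 <= Cc.
  move=> s; rewrite /Cc (bigD1 s) //=.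
  have : 0 <= \sum_(t | t != s) (GE t).2.
    by apply: sumr_ge0 => t _; case: (hGE t) => _ _ _ /ltW.
  lra.
have hCc : 0 < Cc.
  rewrite /Cc; have : 0 <= \sum_s (GE s).2.
    by apply: sumr_ge0 => t _; case: (hGE t) => _ _ _ /ltW.
  lra.
have inbb : forall i : 'I_N, inblock L (bl i) i by move=> i; rewrite hb.
have blE : forall s (i : 'I_N), inblock L s i -> bl i = s by move=> s i; rewrite hb => /eqP.
apply: (@key R N (fun i => nat_of_ord (bl i)) _ _ (fun a i => (((GE (bl a)).1.1 a i)%:C)%C)
   (fun a => (((GE (bl a)).1.2 a)%:C)%C) _ _ _ _ _ _ Cc hCc).
- by move=> i; exact: nc_cexp.
- by move=> i j /val_inj ->.
- move=> i j hij; have hne : bl i != bl j by apply/eqP => h; apply: hij; rewrite h.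
  have := hbeta (k%:Z) _ _ _ hne; rewrite -pmulrn; apply.
  by apply/eqP => h; move: hk0; case: h => ->.
- move=> a i hai; case: (hGE (bl a)) => h1 _ _ _ _; rewrite h1 //.
  by rewrite hb; apply/eqP => h; apply: hai; rewrite h.
- move=> a b /val_inj hab hne; case: (hGE (bl a)) => _ _ h3 _ _.
  have hb' : inblock L (bl a) b by rewrite hab.
  have H := h3 a b (inbb a) hb' hne; rewrite -hab.
  by apply: contra H => /eqP /cinj /eqP.
- move=> a j /val_inj hja; case: (hGE (bl a)) => _ h2 _ _ _.
  under eq_bigr => i _ do rewrite -rmorphM.
  rewrite -(rmorph_sum (real_complex R)) -rmorphM h2 //.
  by rewrite -hja.
- move=> v j; case: (hGE (bl j)) => _ _ _ _ h5.
  have [a [ha hle]] := h5 v j (inbb j).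
  exists a; split; first by rewrite (blE _ _ ha).
  rewrite (blE _ _ ha); apply: le_trans hle _; apply: ler_wpM2r; [exact: nc_ge0|exact: hCs].
Qed.
End App.

Unset Implicit Arguments.

Lemma eigv_ext (R : realType) N (d1 d2 : 'I_N -> complex R) W e lam x :
  (forall i, d1 i = d2 i) -> eigv d1 W e lam x -> eigv d2 W e lam x.
Proof. by move=> h hx i; rewrite -h; exact: hx. Qed.

Lemma expand (R : realType) N (x y : 'I_N -> complex R) (W : 'I_N -> 'I_N -> complex R) e :
  \sum_i y i * (x i + e * \sum_j W i j * x j) =
  \sum_i y i * x i + e * \sum_i \sum_j y i * W i j * x j.
Proof.
rewrite mulr_sumr -big_split; apply: eq_bigr => i _; rewrite mulrDr; congr (_ + _).
by rewrite mulrCA [y i * _]mulr_sumr; congr (e * _); apply: eq_bigr => j _; ring.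
Qed.

Lemma conj_mul_conj (R : realType) (a b : complex R) : (a * b^*)^* = a^* * b.
Proof.
by case: a => a1 a2; case: b => b1 b2; apply/eqP; rewrite eq_complex /=; apply/andP; split; apply/eqP; ring.
Qed.

Theorem lemma4p3 (R : realType) (N S : nat) (L : 'I_S -> nat) (Wdot : 'M[R]_N)
  (k : nat) (beta : 'I_S -> R)
  (hS : (1 < S)%N) (hSN : (S <= N)%N)
  (hL : bandwidth N L) (hW : admissible L Wdot) (hbeta : Gamma beta)
  (f : R -> 'I_N -> 'cV[complex R]_N)
  (hf : exists2 eps1 : R, 0 < eps1 & forall eps : R, 0 < eps < eps1 ->
          unit_eigenbasis (Dmat N L k beta *m Weps Wdot eps) (f eps)) :
  forall l m : 'I_N, l != m ->
    exists2 eps0 : R, 0 < eps0 & forall eps : R, 0 < eps < eps0 ->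
      cdot (f eps l) (Dmat N L k beta *m cconj (f eps m)) = 0.
Proof.
move=> l m hlm.
have : forall i : 'I_N, exists s : 'I_S, inblock L s i := fun i => blk_ex hL (ltn_ord i).
case/fin_all_exists => bl hbl.
have hb : forall s (i : 'I_N), inblock L s i = (s == bl i).
  by move=> s i; apply/idP/eqP => [h|->]; [exact: blk_uniq h (hbl i)| exact: hbl].
have [eps2 he2 hkey] := keyapp k hL hW hbeta hb.
case: hf => eps1 he1 hf.
exists (Num.min eps1 eps2); first by rewrite lt_min he1 he2.
move=> eps /andP[e0]; rewrite lt_min => /andP[e1 e2].
case: (hf eps); first by rewrite e0 e1.
move=> hev hnorm hunit.
have hD := Dent k beta hb.
set dfun := fun i => cexp (- (2 * pi * k%:R * beta (bl i))) in hkey hD.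
have hsym : forall i j, Wdot i j = Wdot j i.
  case: hW => hT _ _ _ _ i j; by rewrite -[in LHS]hT mxE.
case: (hev l) => laml hl; case: (hev m) => lamm hm.
have hl' : eigv dfun (fun i j => ((Wdot i j)%:C)%C) ((eps%:C)%C) laml (fun i => f eps l i 0).
  have := @eig_coord R N (\row_i dfun i) Wdot eps laml (f eps l).
  by rewrite -hD => /(_ hl); apply: eigv_ext => i; rewrite mxE.
have hm' : eigv dfun (fun i j => ((Wdot i j)%:C)%C) ((eps%:C)%C) lamm (fun i => f eps m i 0).
  have := @eig_coord R N (\row_i dfun i) Wdot eps lamm (f eps m).
  by rewrite -hD => /(_ hm); apply: eigv_ext => i; rewrite mxE.
have hx0 : exists i, f eps l i 0 != 0.
  case: (boolP [exists i, f eps l i 0 != 0]) => [/existsP //|/existsPn H]; exfalso.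
  have := hnorm l; rewrite /cdot big1 => [/eqP|i _]; first by rewrite eq_sym oner_eq0.
  by move: (H i); rewrite negbK => /eqP ->; rewrite mul0r.
have hlam : laml != lamm.
  apply/eqP => E; rewrite E in hl'.
  have [c hc] := hkey eps (introT andP (conj e0 e2)) lamm _ _ hl' hm' hx0.
  set F := \matrix_(j, i) f eps i j 0 in hunit.
  pose z : 'cV[complex R]_N := \col_i (if i == l then c else if i == m then -1 else 0).
  have Fz : F *m z = 0.
    apply/matrixP => j o; rewrite !mxE (bigD1 l) //= (bigD1 m) /=; last by rewrite eq_sym.
    rewrite big1 => [|i /andP[hil him]]; last by rewrite !mxE (negbTE hil) (negbTE him) mulr0.
    rewrite !mxE eqxx (negbTE (_ : m != l)) ?eqxx; last by rewrite eq_sym.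
    rewrite hc; ring.
  have : z = 0 by rewrite -(mulKmx hunit z) Fz mulmx0.
  move/matrixP => /(_ m 0); rewrite !mxE (negbTE (_ : m != l)) ?eqxx; last by rewrite eq_sym.
  by move/eqP; rewrite oppr_eq0 oner_eq0.
rewrite /cdot hD.
have E : forall j, (diag_mx (\row_i dfun i) *m cconj (f eps m)) j 0 = dfun j * (f eps m j 0)^*.
  by move=> j; rewrite mul_diag_mx !mxE.
under eq_bigr => j _ do rewrite E conj_mul_conj.
set B := \sum_j _.
have dd : forall i, dfun i * (dfun i)^* = 1 by move=> i; exact: cexp_conj.
set x := fun i => f eps l i 0 in hl' hm' B *.
set y := fun i => f eps m i 0 in hl' hm' B *.
set Wc := fun i j => ((Wdot i j)%:C)%C in hl' hm' *.
set e := ((eps%:C)%C) in hl' hm' *.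
have T1 : laml * B = \sum_i y i * (x i + e * \sum_j Wc i j * x j).
  rewrite /B mulr_sumr; apply: eq_bigr => i _.
  transitivity ((laml * x i) * (dfun i)^* * y i); first by rewrite /x /y; ring.
  rewrite -hl'.
  transitivity ((dfun i * (dfun i)^*) * (y i * (x i + e * \sum_j Wc i j * x j))); first by ring.
  by rewrite dd mul1r.
have T2 : lamm * B = \sum_i x i * (y i + e * \sum_j Wc i j * y j).
  rewrite /B mulr_sumr; apply: eq_bigr => i _.
  transitivity (x i * (dfun i)^* * (lamm * y i)); first by rewrite /x /y; ring.
  rewrite -hm'.
  transitivity ((dfun i * (dfun i)^*) * (x i * (y i + e * \sum_j Wc i j * y j))); first by ring.
  by rewrite dd mul1r.
have T3 : laml * B = lamm * B.
  rewrite T1 T2 !expand; congr (_ + _).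
    by apply: eq_bigr => i _; rewrite mulrC.
  congr (e * _); rewrite exchange_big /=; apply: eq_bigr => i _; apply: eq_bigr => j _.
  by rewrite /Wc hsym; ring.
have : (laml - lamm) * B = 0 by rewrite mulrBl T3 subrr.
move/eqP; rewrite mulf_eq0 subr_eq0 (negbTE hlam) /=.
by move/eqP.
Qed.
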